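(* Let $\boldsymbol{\beta}=(\beta_1,\dots,\beta_p)$ be an alternate base and $\delta=\prod_{i=1}^p\beta_i$. Suppose there exists $\gamma>0$ such that every rational number in $[0,\gamma)$ has an eventually periodic $\boldsymbol{\beta}$-expansion. Then $\delta$ is an algebraic integer.
   Context: An alternate base is a $p$-tuple $\boldsymbol{\beta}=(\beta_1,\dots,\beta_p)$ of reals $\beta_i>1$, identified with the purely periodic sequence $(\beta_k)_{k\ge1}$, $\beta_{k+p}=\beta_k$. For $x\in[0,1)$ the $\boldsymbol{\beta}$-expansion $d_{\boldsymbol{\beta}}(x)=a_1a_2\cdots$ is given by the greedy algorithm $r_0=x$, $a_{k+1}=\lfloor\beta_{k+1}r_k\rfloor$, $r_{k+1}=\beta_{k+1}r_k-a_{k+1}$, so $x=\sum_{k\ge1}a_k/\prod_{i=1}^k\beta_i$. *)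

(* Defs.v *)
From Stdlib Require Import Reals ZArith List Lia.
Open Scope R_scope.

(* An alternate base of length p is given by beta : nat -> R, where
   beta i (0 <= i < p) is beta_{i+1}.  The periodic extension:
   bseq beta p k = beta_{k+1} (0-indexed), i.e. beta (k mod p). *)
Definition bseq (beta : nat -> R) (p k : nat) : R := beta (k mod p)%nat.

Definition is_alternate_base (beta : nat -> R) (p : nat) : Prop :=
  (1 <= p)%nat /\ forall i, (i < p)%nat -> 1 < beta i.

Fixpoint rem_seq (beta : nat -> R) (p : nat) (x : R) (k : nat) : R :=
  match k with
  | O => x
  | S k' => let y := bseq beta p k' * rem_seq beta p x k' in
            y - IZR (Int_part y)
  end.

(* Digits: digit k = a_{k+1} = floor(beta_{k+1} r_k). *)
Definition digit (beta : nat -> R) (p : nat) (x : R) (k : nat) : Z :=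
  Int_part (bseq beta p k * rem_seq beta p x k).

Definition eventually_periodic (a : nat -> Z) : Prop :=
  exists N P : nat, (0 < P)%nat /\ forall n, (N <= n)%nat -> a (n + P)%nat = a n.

Definition is_rational (x : R) : Prop :=
  exists (m : Z) (n : Z), (0 < n)%Z /\ x = IZR m / IZR n.

Fixpoint prod_beta (beta : nat -> R) (n : nat) : R :=
  match n with
  | O => 1
  | S n' => prod_beta beta n' * beta n'
  end.

Fixpoint zpoly_eval (c : list Z) (x : R) : R :=
  match c with
  | nil => 0
  | a :: c' => IZR a + x * zpoly_eval c' x
  end.

(* x is an algebraic integer: root of a monic polynomial with integer coeffs,
   X^n + c_{n-1} X^{n-1} + ... + c_0. *)
Definition algebraic_integer (x : R) : Prop :=
  exists c : list Z, zpoly_eval (c ++ 1%Z :: nil) x = 0.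

(* Main.v *)
Require Import Defs.
From Stdlib Require Import Reals ZArith List Lia Lra.
From Stdlib Require Import IndefiniteDescription.
Open Scope R_scope.

Fixpoint sumR (f : nat -> R) (n : nat) : R :=
  match n with O => 0 | S n' => sumR f n' + f n' end.

Lemma sumR_ext f g n : (forall t, (t < n)%nat -> f t = g t) -> sumR f n = sumR g n.
Proof. induction n; simpl; intros H; auto. rewrite IHn by (intros; apply H; lia). rewrite H by lia. reflexivity. Qed.

Lemma sumR_scal c f n : sumR (fun t => c * f t) n = c * sumR f n.
Proof. induction n; simpl; [ring|rewrite IHn; ring]. Qed.

Lemma sumR_plus f g n : sumR (fun t => f t + g t) n = sumR f n + sumR g n.
Proof. induction n; simpl; [ring|rewrite IHn; ring]. Qed.

Lemma Int_part_eq (z : Z) (r : R) : IZR z <= r < IZR z + 1 -> Int_part r = z.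
Proof.
  intros [H1 H2]. destruct (base_Int_part r) as [H3 H4].
  assert (A : IZR (Int_part r - z) < 1) by (rewrite minus_IZR; lra).
  assert (B : IZR (z - Int_part r) < 1) by (rewrite minus_IZR; lra).
  apply lt_IZR in A. apply lt_IZR in B. lia.
Qed.

Inductive inM (G : list R) : R -> Prop :=
| inM0 : inM G 0
| inMg : forall g, In g G -> inM G g
| inMadd : forall u v, inM G u -> inM G v -> inM G (u + v)
| inMopp : forall u, inM G u -> inM G (- u).

Lemma inM_sub G u v : inM G u -> inM G v -> inM G (u - v).
Proof. intros. unfold Rminus. apply inMadd; auto. apply inMopp; auto. Qed.

Lemma inM_nmul G u n : inM G u -> inM G (INR n * u).
Proof.
  intros H. induction n.
  - simpl. rewrite Rmult_0_l. apply inM0.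
  - rewrite S_INR, Rmult_plus_distr_r, Rmult_1_l. apply inMadd; auto.
Qed.

Lemma inM_zmul G u z : inM G u -> inM G (IZR z * u).
Proof.
  intros H. destruct z.
  - simpl. rewrite Rmult_0_l. apply inM0.
  - rewrite <- positive_nat_Z, <- INR_IZR_INZ. apply inM_nmul; auto.
  - rewrite <- Pos2Z.opp_pos, opp_IZR, <- positive_nat_Z, <- INR_IZR_INZ.
    replace (- INR (Pos.to_nat p) * u) with (- (INR (Pos.to_nat p) * u)) by ring.
    apply inMopp, inM_nmul; auto.
Qed.

Lemma inM_sumR G f n : (forall t, (t < n)%nat -> inM G (f t)) -> inM G (sumR f n).
Proof.
  induction n; intros H; simpl; [apply inM0|]. apply inMadd; auto.
Qed.

Lemma sumR_ind_fun f n j : (j < n)%nat ->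
  sumR (fun t => IZR (if Nat.eq_dec t j then 1%Z else 0%Z) * f t) n = f j.
Proof.
  induction n; intros H; [lia|]. simpl.
  destruct (Nat.eq_dec n j) as [->|E].
  - rewrite (sumR_ext _ (fun _ => 0)).
    + assert (Z0 : forall m, sumR (fun _ => 0) m = 0) by (induction m; simpl; [ring|rewrite IHm; ring]).
      rewrite Z0. destruct (Nat.eq_dec j j); [|lia]. simpl. ring.
    + intros t Ht. destruct (Nat.eq_dec t j); [lia|]. simpl; ring.
  - rewrite IHn by lia. simpl. ring.
Qed.

Lemma inM_coeffs G v : inM G v ->
  exists c : nat -> Z, v = sumR (fun j => IZR (c j) * nth j G 0) (length G).
Proof.
  induction 1.
  - exists (fun _ => 0%Z). clear. induction (length G); simpl; [ring| rewrite <- IHn; ring].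
  - destruct (In_nth G g 0 H) as [j [Hj E]].
    exists (fun t => if Nat.eq_dec t j then 1%Z else 0%Z). rewrite sumR_ind_fun; auto.
  - destruct IHinM1 as [c1 E1]. destruct IHinM2 as [c2 E2].
    exists (fun j => (c1 j + c2 j)%Z). rewrite E1, E2, <- sumR_plus.
    apply sumR_ext. intros. rewrite plus_IZR. ring.
  - destruct IHinM as [c1 E1]. exists (fun j => (- c1 j)%Z). rewrite E1.
    replace (- sumR (fun j : nat => IZR (c1 j) * nth j G 0) (length G))
      with (-1 * sumR (fun j : nat => IZR (c1 j) * nth j G 0) (length G)) by ring.
    rewrite <- sumR_scal. apply sumR_ext. intros. rewrite opp_IZR. ring.
Qed.

Lemma module_coeffs G d : (forall g, In g G -> inM G (d * g)) ->
  exists C : nat -> nat -> Z, forall i, (i < length G)%nat ->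
    d * nth i G 0 = sumR (fun j => IZR (C i j) * nth j G 0) (length G).
Proof.
  intros H.
  assert (H' : forall i, exists c : nat -> Z, (i < length G)%nat ->
    d * nth i G 0 = sumR (fun j => IZR (c j) * nth j G 0) (length G)).
  { intros i. destruct (Nat.lt_ge_cases i (length G)) as [Hi|Hi].
    - destruct (inM_coeffs G (d * nth i G 0)) as [c E].
      + apply H. apply nth_In; auto.
      + exists c. auto.
    - exists (fun _ => 0%Z). intros; lia. }
  exists (fun i => proj1_sig (constructive_indefinite_description _ (H' i))).
  intros i Hi. destruct (constructive_indefinite_description _ (H' i)) as [c Hc]. simpl. auto.
Qed.

Lemma gather (s : R -> nat -> R) xs :
  (forall y, In y xs -> exists L, (forall j, In (s y j) L) /\ (forall g, In g L -> exists j, g = s y j)) ->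
  exists G, (forall y, In y xs -> forall j, In (s y j) G) /\
            (forall g, In g G -> exists y j, In y xs /\ g = s y j).
Proof.
  induction xs as [|y0 xs IH]; intros H.
  - exists nil. split; [intros y []| intros g []].
  - destruct (H y0 (or_introl eq_refl)) as [L [HL1 HL2]].
    destruct IH as [G [HG1 HG2]]; [intros; apply H; right; auto|].
    exists (L ++ G). split.
    + intros y [<-|Hy] j; apply in_or_app; [left|right]; auto.
    + intros g Hg. apply in_app_or in Hg. destruct Hg as [Hg|Hg].
      * destruct (HL2 g Hg) as [j E]. exists y0, j. split; [left|]; auto.
      * destruct (HG2 g Hg) as [y [j [Hy E]]]. exists y, j. split; [right|]; auto.
Qed.

Lemma arith (PK pt bt w dl D u x c : R) : 1 <= PK -> 1 <= pt -> c <= bt -> 1 < c -> 1 <= w ->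
  w * (pt * bt) = dl -> D = PK * dl -> 0 < u -> D * u < c - 1 -> D * u < 1 ->
  / (PK * (pt * bt)) < x -> x <= / (PK * (pt * bt)) + u ->
  PK * pt * x < 1 /\ 1 <= PK * (pt * bt) * x < 2 /\ w * (PK * (pt * bt) * x - 1) < 1.
Proof.
  intros H1 H2 H3 H4 H5 H6 H7 H8 H9 H10 H11 H12.
  set (A := PK * (pt * bt)) in *.
  assert (HA : 1 <= A) by (unfold A; assert (1 <= pt * bt) by nra; nra).
  assert (HAD : D = w * A) by (rewrite H7, <- H6; unfold A; ring).
  assert (X1 : 1 < A * x).
  { apply Rmult_lt_compat_l with (r := A) in H11; [|lra]. rewrite Rinv_r in H11; lra. }
  assert (X2 : A * x <= 1 + A * u).
  { apply Rmult_le_compat_l with (r := A) in H12; [|lra].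
    rewrite Rmult_plus_distr_l, Rinv_r in H12; lra. }
  assert (AuD : A * u <= D * u) by (rewrite HAD; nra).
  split; [|split; [split|]].
  - assert (PK * pt * x * bt < bt) by (replace (PK * pt * x * bt) with (A * x) by (unfold A; ring); lra).
    nra.
  - lra.
  - lra.
  - assert (w * (A * x - 1) <= w * (A * u)) by (apply Rmult_le_compat_l; lra).
    replace (w * (A * u)) with (D * u) in H by (rewrite HAD; ring). lra.
Qed.

Lemma div_lt A B L : 0 < L -> A < B * L -> A * / L < B.
Proof.
  intros HL H. apply Rmult_lt_reg_r with L; auto.
  rewrite Rmult_assoc, Rinv_l by lra. lra.
Qed.

Section Base.
Variable beta : nat -> R.
Variable p : nat.
Hypothesis Hb : is_alternate_base beta p.

Notation b := (bseq beta p).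

Lemma p_pos : (1 <= p)%nat. Proof. destruct Hb; auto. Qed.

Lemma b_gt1 k : 1 < b k.
Proof. unfold bseq. destruct Hb as [H1 H2]. apply H2. apply Nat.mod_upper_bound. lia. Qed.

Lemma cmin_ex : exists c, 1 < c /\ forall k, c <= b k.
Proof.
  destruct Hb as [H1 H2].
  assert (G : forall n, (n <= p)%nat -> exists c, 1 < c /\ forall i, (i < n)%nat -> c <= beta i).
  { induction n; intros Hn.
    - exists 2. split; [lra| intros; lia].
    - destruct IHn as [c [Hc1 Hc2]]; [lia|]. exists (Rmin c (beta n)). split.
      + apply Rmin_glb_lt; auto.
      + intros i Hi. destruct (Nat.eq_dec i n) as [->|E].
        * apply Rmin_r.
        * eapply Rle_trans; [apply Rmin_l| apply Hc2; lia]. }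
  destruct (G p (le_n p)) as [c [Hc1 Hc2]]. exists c. split; auto.
  intros k. unfold bseq. apply Hc2. apply Nat.mod_upper_bound. lia.
Qed.

Notation r x := (rem_seq beta p x).
Notation a x := (digit beta p x).

Lemma rem_S x k : r x (S k) = b k * r x k - IZR (a x k).
Proof. reflexivity. Qed.

Lemma rem_S_bounds x k : 0 <= r x (S k) < 1.
Proof.
  rewrite rem_S. unfold digit. destruct (base_Int_part (b k * r x k)). lra.
Qed.

Lemma rem_bounds x k : 0 <= x < 1 -> 0 <= r x k < 1.
Proof. intros H. destruct k; [exact H| apply rem_S_bounds]. Qed.

Fixpoint Bf (n k : nat) : R :=
  match k with O => 1 | S k' => Bf n k' * b (n + k') end.

Fixpoint pr (lo n : nat) : R :=
  match n with O => 1 | S n' => pr lo n' * beta (lo + n') end.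

Lemma Bf_ge1 n k : 1 <= Bf n k.
Proof.
  induction k; simpl; [lra|]. pose proof (b_gt1 (n+k)).
  replace 1 with (1*1) by ring. apply Rmult_le_compat; lra.
Qed.

Lemma zero_run x n k : 0 <= r x n -> Bf n k * r x n < 1 -> r x (n + k) = Bf n k * r x n.
Proof.
  intros H0. induction k; intros H.
  - simpl. rewrite Nat.add_0_r. ring.
  - simpl in H. pose proof (b_gt1 (n+k)). pose proof (Bf_ge1 n k).
    assert (Hk : Bf n k * r x n < 1).
    { eapply Rle_lt_trans; [|exact H].
      replace (Bf n k * b (n + k) * r x n) with (b (n+k) * (Bf n k * r x n)) by ring.
      rewrite <- (Rmult_1_l (Bf n k * r x n)) at 1.
      apply Rmult_le_compat_r; [apply Rmult_le_pos; lra | lra]. }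
    rewrite Nat.add_succ_r, rem_S, (IHk Hk). simpl.
    unfold digit. rewrite (IHk Hk).
    replace (b (n + k) * (Bf n k * r x n)) with (Bf n k * b (n + k) * r x n) by ring.
    rewrite (Int_part_eq 0). simpl. ring.
    split; simpl; [|lra]. apply Rmult_le_pos; [|lra]. apply Rmult_le_pos; lra.
Qed.

Lemma b_block j s : (s < p)%nat -> b (j * p + s) = beta s.
Proof.
  intros H. unfold bseq. rewrite Nat.add_comm, Nat.Div0.mod_add, Nat.mod_small; auto.
Qed.

Lemma Bf_pr j s k : (s + k <= p)%nat -> Bf (j * p + s) k = pr s k.
Proof.
  induction k; intros H; simpl; auto.
  rewrite IHk by lia. rewrite <- Nat.add_assoc, b_block by lia. reflexivity.
Qed.

Lemma Bf_add n k1 k2 : Bf n (k1 + k2) = Bf n k1 * Bf (n + k1) k2.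
Proof.
  induction k2; simpl.
  - rewrite Nat.add_0_r. ring.
  - rewrite Nat.add_succ_r. simpl. rewrite IHk2, Nat.add_assoc. ring.
Qed.

Lemma pr_add lo k1 k2 : pr lo (k1 + k2) = pr lo k1 * pr (lo + k1) k2.
Proof.
  induction k2; simpl.
  - rewrite Nat.add_0_r. ring.
  - rewrite Nat.add_succ_r. simpl. rewrite IHk2, Nat.add_assoc. ring.
Qed.

Lemma prod_beta_pr k : prod_beta beta k = pr 0 k.
Proof. induction k; simpl; auto. rewrite IHk. reflexivity. Qed.

Lemma pr_ge1 lo k : (lo + k <= p)%nat -> 1 <= pr lo k.
Proof.
  induction k; intros H; simpl; [lra|].
  destruct Hb as [_ H2]. pose proof (H2 (lo + k)%nat ltac:(lia)).
  pose proof (IHk ltac:(lia)).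
  replace 1 with (1*1) by ring. apply Rmult_le_compat; lra.
Qed.

Lemma Bf_0_mul j : Bf 0 (j * p) = (pr 0 p) ^ j.
Proof.
  induction j; simpl; auto.
  rewrite Nat.add_comm, Bf_add, IHj. simpl.
  assert (E : Bf (j * p) p = pr 0 p).
  { replace (j * p)%nat with (j * p + 0)%nat by lia. apply Bf_pr. lia. }
  rewrite E. ring.
Qed.

Lemma block x j k : (k <= p)%nat ->
  r x (j * p + k) = pr 0 k * r x (j * p)
     - sumR (fun t => IZR (a x (j * p + t)) * pr (S t) (k - S t)) k.
Proof.
  induction k; intros Hk.
  - simpl. rewrite Nat.add_0_r. ring.
  - rewrite Nat.add_succ_r, rem_S, IHk by lia. rewrite b_block by lia.
    simpl sumR. simpl pr.
    rewrite (sumR_ext (fun t => IZR (a x (j * p + t)) * pr (S t) (S k - S t))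
                      (fun t => beta k * (IZR (a x (j * p + t)) * pr (S t) (k - S t)))).
    + rewrite sumR_scal, Nat.sub_diag. simpl. ring.
    + intros t Ht. replace (S k - S t)%nat with (S (k - S t)) by lia. simpl.
      replace (S (t + (k - S t)))%nat with k by lia. ring.
Qed.

Lemma b_period m P : b (m + P * p) = b m.
Proof. unfold bseq. rewrite Nat.Div0.mod_add. reflexivity. Qed.

Lemma rem_period x N P : 0 <= x < 1 -> (0 < P)%nat ->
  (forall n, (N <= n)%nat -> a x (n + P) = a x n) ->
  forall n, (N <= n)%nat -> r x (n + P * p) = r x n.
Proof.
  intros Hx HP Ha.
  assert (Hm : forall i n, (N <= n)%nat -> a x (n + i * P) = a x n).
  { induction i; intros n Hn; simpl. { rewrite Nat.add_0_r; auto. }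
    replace (n + (P + i * P))%nat with (n + i * P + P)%nat by lia.
    rewrite Ha by lia. apply IHi; auto. }
  intros n Hn.
  set (e := fun k => r x (n + k + P * p) - r x (n + k)).
  assert (He : forall k, e (S k) = b (n + k) * e k).
  { intros k. unfold e.
    replace (n + S k + P * p)%nat with (S (n + k + P * p)) by lia.
    replace (n + S k)%nat with (S (n + k)) by lia.
    rewrite !rem_S. rewrite b_period.
    replace (P * p)%nat with (p * P)%nat by lia. rewrite Hm by lia. ring. }
  destruct cmin_ex as [c [Hc1 Hc2]].
  assert (Hg : forall k, c ^ k * Rabs (e 0%nat) <= Rabs (e k)).
  { induction k; simpl. { lra. }
    rewrite He, Rabs_mult, (Rabs_right (b (n+k))) by (pose proof (b_gt1 (n+k)); lra).
    rewrite Rmult_assoc. apply Rmult_le_compat; auto; try lra.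
    apply Rmult_le_pos; [apply pow_le; lra| apply Rabs_pos]. }
  assert (Hbd : forall k, Rabs (e k) < 1).
  { intros k. unfold e. pose proof (rem_bounds x (n + k + P * p) Hx).
    pose proof (rem_bounds x (n + k) Hx). unfold Rabs; destruct Rcase_abs; lra. }
  assert (E0 : e 0%nat = 0).
  { destruct (Req_dec (e 0%nat) 0) as [E|E]; auto. exfalso.
    assert (Hpos : 0 < Rabs (e 0%nat)) by (apply Rabs_pos_lt; auto).
    destruct (Pow_x_infinity c ltac:(rewrite Rabs_right; lra) (2 / Rabs (e 0%nat))) as [k Hk].
    specialize (Hk k (le_n k)). rewrite Rabs_right in Hk by (apply Rle_ge, pow_le; lra).
    specialize (Hg k). specialize (Hbd k).
    assert (2 / Rabs (e 0%nat) * Rabs (e 0%nat) <= c ^ k * Rabs (e 0%nat)).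
    { apply Rmult_le_compat_r; lra. }
    field_simplify in H; lra. }
  unfold e in E0. rewrite !Nat.add_0_r in E0. lra.
Qed.

Lemma orbit_list x : 0 <= x < 1 -> eventually_periodic (a x) ->
  exists L, (forall j, In (r x (j * p)) L) /\ (forall g, In g L -> exists j, g = r x (j * p)).
Proof.
  intros Hx [N [P [HP Ha]]].
  pose proof p_pos as Hp.
  assert (Hs : forall j, (N <= j)%nat -> r x ((j + P) * p) = r x (j * p)).
  { intros j Hj. rewrite Nat.mul_add_distr_r. apply (rem_period x N P Hx HP Ha). nia. }
  assert (Hf : forall j, exists j', (j' < N + P)%nat /\ r x (j * p) = r x (j' * p)).
  { intros j. induction j as [j IH] using (well_founded_induction lt_wf).
    destruct (Nat.lt_ge_cases j (N + P)) as [Hj|Hj].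
    - exists j; auto.
    - destruct (IH (j - P)%nat ltac:(lia)) as [j' [H1 H2]]. exists j'. split; auto.
      rewrite <- H2, <- (Hs (j - P)%nat) by lia. replace (j - P + P)%nat with j by lia. reflexivity. }
  exists (map (fun j => r x (j * p)) (seq 0 (N + P))). split.
  - intros j. destruct (Hf j) as [j' [H1 H2]]. rewrite H2. apply (in_map (fun j => r x (j * p))). apply in_seq. lia.
  - intros g Hg. apply in_map_iff in Hg. destruct Hg as [j [H1 _]]. exists j; auto.
Qed.

Lemma main_span (gamma : R) : 0 < gamma ->
  (forall x, is_rational x -> 0 <= x -> x < gamma -> eventually_periodic (a x)) ->
  exists G, (exists g, In g G /\ g <> 0) /\ forall g, In g G -> inM G (pr 0 p * g).
Proof.
  intros Hgam Hper.
  pose proof p_pos as Hp.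
  destruct cmin_ex as [c [Hc1 Hc2]].
  assert (Hdl : 1 < pr 0 p).
  { replace p with (S (p - 1)) at 1 by lia. simpl.
    pose proof (pr_ge1 0 (p - 1) ltac:(lia)). destruct Hb as [_ H2].
    pose proof (H2 (p - 1)%nat ltac:(lia)). nra. }
  set (dl := pr 0 p) in *.
  set (g := Rmin gamma 1).
  assert (Hg0 : 0 < g) by (apply Rmin_glb_lt; lra).
  assert (Hg1 : g <= gamma) by apply Rmin_l.
  assert (Hg2 : g <= 1) by apply Rmin_r.
  destruct (Pow_x_infinity dl ltac:(rewrite Rabs_right; lra) (3 / g)) as [K HK].
  specialize (HK K (le_n K)). rewrite Rabs_right in HK by (apply Rle_ge, pow_le; lra).
  set (PK := dl ^ K) in *.
  assert (HPK : 1 <= PK) by (apply pow_R1_Rle; lra).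
  assert (HPKg : / PK <= g / 3).
  { replace (g / 3) with (/ (3 / g)) by (field; lra). apply Rinv_le_contravar; [|lra].
    unfold Rdiv. apply Rmult_lt_0_compat; [lra| apply Rinv_0_lt_compat; lra]. }
  set (D := PK * dl).
  assert (HD : 0 < D) by (unfold D; nra).
  set (M := D / (c - 1) + D + 3 / g).
  destruct (archimed M) as [HM _].
  set (l := up M) in *.
  assert (HM1 : 0 < D / (c - 1)) by (unfold Rdiv; apply Rmult_lt_0_compat; [lra| apply Rinv_0_lt_compat; lra]).
  assert (HM2 : 0 < 3 / g) by (unfold Rdiv; apply Rmult_lt_0_compat; [lra| apply Rinv_0_lt_compat; lra]).
  assert (Hl : 0 < IZR l) by (unfold M in HM; lra).
  set (u := / IZR l).
  assert (Hu : 0 < u) by (apply Rinv_0_lt_compat; auto).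
  assert (HDu1 : D * u < c - 1).
  { apply div_lt; auto. assert (D / (c - 1) < IZR l) by (unfold M in HM; lra).
    apply Rmult_lt_compat_l with (r := c - 1) in H; [|lra].
    unfold Rdiv in H. rewrite <- Rmult_assoc, (Rmult_comm (c - 1)), Rmult_assoc, Rinv_r in H by lra. lra. }
  assert (HDu2 : D * u < 1).
  { apply div_lt; auto. unfold M in HM. lra. }
  assert (Hug : u < g / 3).
  { replace u with (1 * / IZR l) by (unfold u; ring). apply div_lt; auto.
    assert (3 / g < IZR l) by (unfold M in HM; lra).
    apply Rmult_lt_compat_l with (r := g / 3) in H; [|lra].
    replace (g / 3 * (3 / g)) with 1 in H by (field; lra). lra. }
  set (mt := fun t => (Int_part (IZR l * / (PK * (pr 0 t * beta t))) + 1)%Z).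
  set (xf := fun t => IZR (mt t) * u).
  assert (Hxf : forall t, (t < p)%nat ->
     / (PK * (pr 0 t * beta t)) < xf t <= / (PK * (pr 0 t * beta t)) + u).
  { intros t Ht. unfold xf, mt. set (th := / (PK * (pr 0 t * beta t))).
    destruct (base_Int_part (IZR l * th)) as [B1 B2]. rewrite plus_IZR.
    assert (Eth : IZR l * th * u = th) by (unfold u; field; lra).
    split.
    - rewrite <- Eth at 1. apply Rmult_lt_compat_r; auto; lra.
    - assert (Eth2 : (IZR l * th + 1) * u = th + u) by (unfold u; field; lra).
      rewrite <- Eth2. apply Rmult_le_compat_r; lra. }
  assert (Hprops : forall t, (t < p)%nat -> 1 <= pr 0 t /\ c <= beta t /\ 1 <= pr (S t) (p - S t)
          /\ pr (S t) (p - S t) * (pr 0 t * beta t) = dl).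
  { intros t Ht. split; [apply pr_ge1; lia|]. split.
    - specialize (Hc2 t). unfold bseq in Hc2. rewrite Nat.mod_small in Hc2; auto.
    - split; [apply pr_ge1; lia|]. unfold dl.
      assert (E : pr 0 p = pr 0 (S t + (p - S t))) by (f_equal; lia).
      rewrite E, pr_add. simpl. ring. }
  assert (Hxr : forall t, (t < p)%nat -> 0 <= xf t < g).
  { intros t Ht. destruct (Hxf t Ht) as [X1 X2]. destruct (Hprops t Ht) as [P1 [P2 _]].
    assert (/ (PK * (pr 0 t * beta t)) <= / PK).
    { apply Rinv_le_contravar; [lra|]. assert (1 <= pr 0 t * beta t) by nra. nra. }
    assert (0 < / (PK * (pr 0 t * beta t))).
    { apply Rinv_0_lt_compat. assert (1 <= pr 0 t * beta t) by nra. nra. }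
    lra. }
  set (xs := u :: map xf (seq 0 p)).
  assert (Hxs : forall y, In y xs -> exists L, (forall j, In (r y (j * p)) L) /\
             (forall g0, In g0 L -> exists j, g0 = r y (j * p))).
  { intros y Hy. assert (Hy' : 0 <= y < g /\ is_rational y).
    { destruct Hy as [<-|Hy].
      - split; [lra|]. exists 1%Z, l. split; [apply lt_IZR; auto| unfold u, Rdiv; ring].
      - apply in_map_iff in Hy. destruct Hy as [t [<- Ht]]. apply in_seq in Ht.
        split; [apply Hxr; lia|]. exists (mt t), l. split; [apply lt_IZR; auto| unfold xf, u, Rdiv; ring]. }
    destruct Hy' as [[Hy1 Hy2] Hy3].
    apply orbit_list; [lra|]. apply Hper; auto; lra. }
  destruct (gather (fun y j => r y (j * p)) xs Hxs) as [G [HG1 HG2]].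
  exists G. split.
  { exists u. split; [|lra]. apply (HG1 u (or_introl eq_refl) 0%nat). }
  assert (Hru : r u (S K * p) = D * u).
  { pose proof (zero_run u 0 (S K * p)) as Z. simpl plus in Z.
    rewrite Bf_0_mul in Z. simpl rem_seq in Z. simpl pow in Z.
    replace (S K * p)%nat with (p + K * p)%nat by (simpl; lia).
    assert (E : pr 0 p * pr 0 p ^ K = D) by (unfold D, PK, dl; ring).
    rewrite E in Z. apply Z; lra. }
  assert (Hw : forall t, (t < p)%nat -> inM G (pr (S t) (p - S t))).
  { intros t Ht. set (w := pr (S t) (p - S t)). set (x := xf t).
    destruct (Hprops t Ht) as [P1 [P2 [P3 P4]]]. fold w in P3, P4.
    destruct (Hxf t Ht) as [X1 X2]. fold x in X1, X2.
    destruct (arith PK (pr 0 t) (beta t) w dl D u x c HPK P1 P2 Hc1 P3 P4 eq_refl Hu HDu1 HDu2 X1 X2)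
      as [A1 [[A2 A3] A4]].
    assert (Hx0 : 0 <= x) by (pose proof (Hxr t Ht); unfold x; lra).
    assert (Sa : r x (K * p + t) = PK * pr 0 t * x).
    { pose proof (zero_run x 0 (K * p + t)) as Z. simpl plus in Z. rewrite Bf_add in Z.
      rewrite Bf_0_mul in Z. simpl plus in Z.
      assert (E : Bf (K * p) t = pr 0 t) by (rewrite <- (Nat.add_0_r (K * p)); apply Bf_pr; lia).
      rewrite E in Z. simpl rem_seq in Z.
      assert (E2 : pr 0 p ^ K = PK) by reflexivity. rewrite E2 in Z. apply Z; lra. }
    assert (Sb : r x (S (K * p + t)) = PK * (pr 0 t * beta t) * x - 1).
    { rewrite rem_S. unfold digit. rewrite Sa, b_block by lia.
      replace (beta t * (PK * pr 0 t * x)) with (PK * (pr 0 t * beta t) * x) by ring.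
      rewrite (Int_part_eq 1). simpl; ring. simpl. lra. }
    assert (Sc : r x (S K * p) = D * x - w).
    { pose proof (zero_run x (S (K * p + t)) (p - S t)) as Z.
      replace (S (K * p + t) + (p - S t))%nat with (S K * p)%nat in Z by (simpl; lia).
      replace (S (K * p + t)) with (K * p + S t)%nat in Z by lia.
      rewrite Bf_pr in Z by lia. fold w in Z.
      replace (K * p + S t)%nat with (S (K * p + t)) in Z by lia. rewrite Sb in Z.
      rewrite Z by lra. unfold D. rewrite <- P4. ring. }
    replace w with (IZR (mt t) * r u (S K * p) - r x (S K * p)).
    - apply inM_sub; [apply inM_zmul|]; apply inMg.
      + apply (HG1 u (or_introl eq_refl)).
      + apply (HG1 x). right. apply in_map. apply in_seq. lia.
    - rewrite Hru, Sc. unfold x, xf. ring. }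
  intros g0 Hg. destruct (HG2 g0 Hg) as [y [j [Hy ->]]].
  unfold dl.
  pose proof (block y j p (le_n p)) as Bl.
  replace (j * p + p)%nat with (S j * p)%nat in Bl by (simpl; lia).
  replace (pr 0 p * r y (j * p)) with
    (r y (S j * p) + sumR (fun t => IZR (a y (j * p + t)) * pr (S t) (p - S t)) p)
    by (unfold dl in *; rewrite Bl; ring).
  apply inMadd; [apply inMg, HG1; auto|].
  apply inM_sumR. intros t Ht. apply inM_zmul, Hw; auto.
Qed.
End Base.

From HB Require Import structures.
From mathcomp Require Import all_boot all_order all_algebra.
From mathcomp Require Import Rstruct ssrZ.
Import GRing.Theory Num.Theory.

Lemma IZR_int (z : Z) : IZR z = ((int_of_Z z)%:~R : R)%R.
Proof.
case: z => [|q|q] //=.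
- by rewrite IZRposE INRE Pos_to_natE.
- have Hp := Pos2Nat.is_pos q.
  rewrite NegzE prednK; last by apply/ltP.
  rewrite -[Z.neg q]/(Z.opp (Z.pos q)) opp_IZR RoppE.
  by rewrite IZRposE INRE Pos_to_natE mulrNz.
Qed.

Lemma IZR_Z_of_int (z : int) : IZR (Z_of_int z) = (z%:~R : R)%R.
Proof. by rewrite IZR_int Z_of_intK. Qed.

Lemma zpoly_Poly (s : seq int) (x : R) :
  zpoly_eval (map Z_of_int s) x = (Poly (map intr s)).[x]%R.
Proof.
elim: s => [|a s IH] /=; first by rewrite horner0.
by rewrite horner_cons IH IZR_Z_of_int RplusE RmultE mulrC addrC.
Qed.

Lemma sumR_big (f : nat -> R) n : sumR f n = (\sum_(j < n) f j)%R.
Proof. elim: n => [|n IH] /=; first by rewrite big_ord0. by rewrite big_ord_recr IH. Qed.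

Lemma crit (n : nat) (C : nat -> nat -> Z) (y : nat -> R) (d : R) :
  (exists i, lt i n /\ y i <> 0) ->
  (forall i, lt i n -> d * y i = sumR (fun j => IZR (C i j) * y j) n) ->
  algebraic_integer d.
Proof.
move=> [i0 [Hi0 Hy0]] Hrel.
pose B : 'M[int]_n := (\matrix_(i, j) int_of_Z (C j i))%R.
pose v : 'rV[R]_n := (\row_j y j)%R.
have Hev : eigenvalue (map_mx intr B) d.
  apply/eigenvalueP; exists v.
    apply/rowP => k; rewrite !mxE.
    have Hk := ltn_ord k.
    rewrite -RmultE (Hrel k (elimT ltP Hk)) sumR_big.
    apply: eq_bigr => j _; rewrite !mxE -IZR_int RmultE mulrC //.
  apply/negP => /eqP H0; apply: Hy0.
  have := congr1 (fun M : 'rV[R]_n => M ord0 (Ordinal (introT ltP Hi0))) H0.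
  by rewrite !mxE.
rewrite eigenvalue_root_char -map_char_poly in Hev.
have Hm := char_poly_monic B.
move: Hev Hm; set q := char_poly B => Hev Hm.
rewrite /root map_polyE in Hev.
move: Hm; rewrite qualifE /lead_coef => /eqP Hlc.
move: Hev Hlc; rewrite lead_coefE.
case/lastP: (polyseq q) => [|s c] /=; first by move=> _ H; discriminate H.
rewrite size_rcons nth_rcons ltnn eqxx => Hev Hc; rewrite Hc in Hev.
exists (map Z_of_int s).
have -> : app (map Z_of_int s) (Z.pos xH :: nil) = map Z_of_int (rcons s 1%R).
  by rewrite -cats1 map_cat.
rewrite zpoly_Poly.
by move/eqP: Hev.
Qed.

Open Scope R_scope.

Theorem lemma3 (beta : nat -> R) (p : nat) :
  is_alternate_base beta p ->
  (exists gamma : R, 0 < gamma /\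
     forall x : R, is_rational x -> 0 <= x -> x < gamma ->
       eventually_periodic (digit beta p x)) ->
  algebraic_integer (prod_beta beta p).
Proof.
  intros Hb [gamma [Hg Hper]].
  destruct (main_span beta p Hb gamma Hg Hper) as [G [[g0 [Hg0 Hne]] Hcl]].
  rewrite prod_beta_pr.
  destruct (module_coeffs G _ Hcl) as [C HC].
  apply (crit (length G) C (fun j => List.nth j G 0) (pr beta 0 p)).
  - destruct (In_nth G g0 0 Hg0) as [i [Hi E]]. exists i. split; [exact Hi|]. simpl. rewrite E. exact Hne.
  - exact HC.
Qed.
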